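(* Let $X,S\in\operatorname{rep}(Q)$ with $\dim_K\operatorname{Ext}^1_{KQ}(S,X)=1$ and let $R$ be $R_d$ or $R_{d,\mathrm{str}}$. Write $[A,B]^1=\dim_K\operatorname{Ext}^1_R(A,B)$. (i) If $V,V'\subseteq\Phi(X)$ are $R$-submodules with $[\Phi(S),\Phi(X)/V]^1=[\Phi(S),\Phi(X)/V']^1=1$, then $[\Phi(S),\Phi(X)/(V+V')]^1=1$. (ii) If $W,W'\subseteq\Phi(S)$ are $R$-submodules with $[W,\Phi(X)]^1=[W',\Phi(X)]^1=1$, then $[W\cap W',\Phi(X)]^1=1$.
   Context: $K=\mathbb{C}$; $Q$ a finite quiver, $\operatorname{rep}(Q)$ its finite-dimensional representations. For $d\geqslant1$, $Q_d$ has vertices $v(Q)\times\{1,\dots,d\}$, arrows $(i,r)\to(i,r+1)$ ($r\leqslant d-1$) and $(i,r)\to(j,r)$ for each arrow $i\to j$ of $Q$, $r\in\{1,\dots,d\}$. For $d\geqslant2$, $Q_{d,\mathrm{str}}$ has the same vertices and vertical arrows and arrows $(i,r)\to(j,r-1)$ for each arrow $i\to j$, $r\in\{2,\dots,d\}$. $R_d=KQ_d/I$, $R_{d,\mathrm{str}}=KQ_{d,\mathrm{str}}/I$ with $I$ the ideal identifying all paths with equal source and target. $\Phi(X)_{(i,r)}=X_i$, identity maps on vertical arrows, $X_{i\to j}$ on arrows coming from $i\to j$. *)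

(* Defs.v *)
(* K = C is modelled as complex numbers over Stdlib's reals
   (Rstruct makes Rdefinitions.R a realType, hence an rcfType, and
   real_closed.complex builds R[i]). *)
From HB Require Import structures.
From mathcomp Require Import all_boot all_order all_algebra.
From mathcomp Require Import reals Rstruct.
From mathcomp.real_closed Require Import complex.
Set Implicit Arguments. Unset Strict Implicit. Unset Printing Implicit Defensive.
Import Order.TTheory GRing.Theory Num.Theory.
Local Open Scope ring_scope.

Definition K : fieldType := (Rdefinitions.R)[i].

(* Vertices 'I_nv, arrows 'I_na.  Vectors are ROW vectors: the map of   *)
(* an arrow a acts by  x |-> x *m qmap a.                               *)
Record quiver := Quiver {
  nv : nat; na : nat;
  qsrc : 'I_na -> 'I_nv; qtgt : 'I_na -> 'I_nv }.

Record qrep (Q : quiver) := QRep {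
  qdim : 'I_(nv Q) -> nat;
  qmap : forall a : 'I_(na Q), 'M[K]_(qdim (qsrc a), qdim (qtgt a)) }.

(* Ext^1_{KQ}(S,X): since KQ has no relations, every cochain
   (f_a : S_{s a} -> X_{t a})_a is a cocycle; coboundaries are
   a |-> S_a g_{t a} - g_{s a} X_a.  dim Ext^1 = k is stated as: there are
   k cochains forming a basis of the quotient (cochains / coboundaries). *)
Definition qcochain Q (S X : qrep Q) :=
  forall a : 'I_(na Q), 'M[K]_(qdim S (qsrc a), qdim X (qtgt a)).

Definition qcob Q (S X : qrep Q) (g : forall i, 'M[K]_(qdim S i, qdim X i))
  : qcochain S X :=
  fun a => qmap S a *m g (qtgt a) - g (qsrc a) *m qmap X a.

Definition qisB Q (S X : qrep Q) (f : qcochain S X) : Prop :=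
  exists g : forall i, 'M[K]_(qdim S i, qdim X i), forall a, f a = qcob g a.

Definition qlin Q (S X : qrep Q) k (c : 'I_k -> K) (F : 'I_k -> qcochain S X)
  : qcochain S X := fun a => \sum_(j < k) c j *: F j a.

Definition qsub Q (S X : qrep Q) (f h : qcochain S X) : qcochain S X :=
  fun a => f a - h a.

Definition ext1KQ_dim_is Q (S X : qrep Q) (k : nat) : Prop :=
  exists F : 'I_k -> qcochain S X,
    (forall c : 'I_k -> K, qisB (qlin c F) -> forall j, c j = 0) /\
    (forall f : qcochain S X, exists c : 'I_k -> K, qisB (qsub f (qlin c F))).

(* Representations of Q_d (str = false) and Q_{d,str} (str = true).    *)
(* Rows are indexed 0..d-1 (row r here = row r+1 of the paper).        *)
(*  vertical arrow (i,r) -> (i,r+1)            : sver i r   (r+1 < d)  *)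
(*  arrow from a : i -> j of Q :                                        *)
(*    Q_d      : (i,r)   -> (j,r)               : shor a r   (r < d)    *)
(*    Q_d,str  : (i,r+1) -> (j,r)               : shor a r   (r+1 < d)  *)
(*  i.e. shor a r : (i, r + str) -> (j, r), defined for r + str < d.    *)
(* An R-module is given as a SUBQUOTIENT  U/L  of such a representation *)
(* (U, L families of subspaces, as row spaces of square matrices), so   *)
(* that submodules Phi(S) ⊇ W and quotients Phi(X)/V are available     *)
(* without choosing bases.  Modules actually used below are Phi(X),     *)
(* Phi(X)/V, W ⊆ Phi(S).                                               *)
Record sqmod (Q : quiver) (str : bool) := SQMod {
  sdim : 'I_(nv Q) -> nat -> nat;
  sver : forall i r, 'M[K]_(sdim i r, sdim i r.+1);
  shor : forall (a : 'I_(na Q)) r, 'M[K]_(sdim (qsrc a) ((r + str)%N), sdim (qtgt a) r);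
  sU : forall i r, 'M[K]_(sdim i r);
  sL : forall i r, 'M[K]_(sdim i r) }.

Definition Phi Q (str : bool) (X : qrep Q) : sqmod Q str :=
  @SQMod Q str (fun i _ => qdim X i) (fun i _ => 1%:M) (fun a _ => qmap X a)
    (fun i _ => 1%:M) (fun i _ => 0).

(* V is an R-submodule of M (M with U = everything, L = 0). *)
Definition is_submod Q str (d : nat) (M : sqmod Q str)
  (V : forall i r, 'M[K]_(sdim M i r)) : Prop :=
  (forall i r, (r.+1 < d)%N -> (V i r *m sver M i r <= V i r.+1)%MS) /\
  (forall a r, ((r + str)%N < d)%N -> (V (qsrc a) ((r + str)%N) *m shor M a r <= V (qtgt a) r)%MS).

Definition quotmod Q str (M : sqmod Q str) (V : forall i r, 'M[K]_(sdim M i r)) :=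
  @SQMod Q str (sdim M) (sver M) (shor M) (sU M) V.
Definition submod Q str (M : sqmod Q str) (W : forall i r, 'M[K]_(sdim M i r)) :=
  @SQMod Q str (sdim M) (sver M) (shor M) W (sL M).

(* A linear map  M_v = U/L -> N_w = U'/L'  is represented by an ambient
   matrix F with U F <= U' and L F <= L'; F, F' represent the same map iff
   U (F - F') <= L'. *)
Definition hom_ok m n (U L : 'M[K]_m) (U' L' : 'M[K]_n) (F : 'M[K]_(m, n)) :=
  ((U *m F <= U')%MS && (L *m F <= L')%MS).


Record cochain Q str (M N : sqmod Q str) := Cochain {
  cv : forall i r, 'M[K]_(sdim M i r, sdim N i r.+1);
  ch : forall (a : 'I_(na Q)) r, 'M[K]_(sdim M (qsrc a) ((r + str)%N), sdim N (qtgt a) r) }.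

Definition cochain_ok Q str d (M N : sqmod Q str) (f : cochain M N) : Prop :=
  (forall i r, (r.+1 < d)%N ->
     hom_ok (sU M i r) (sL M i r) (sU N i r.+1) (sL N i r.+1) (cv f i r)) /\
  (forall a r, ((r + str)%N < d)%N ->
     hom_ok (sU M (qsrc a) ((r + str)%N)) (sL M (qsrc a) ((r + str)%N))
            (sU N (qtgt a) r) (sL N (qtgt a) r) (ch f a r)).

(* Cocycle condition: the extension E_v = M_v (+) N_v with arrow maps
   [[M_b, f_b],[0, N_b]] satisfies the commutativity relations generating
   I, i.e. for each arrow a : i -> j of Q and each commutative square
     (i,r+str) -> (j,r) -> (j,r+1)   =   (i,r+str) -> (i,r+1+str) -> (j,r+1)
   (r + str + 1 < d), the off-diagonal blocks agree as maps U/L -> U'/L'. *)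
Definition cocycle Q str d (M N : sqmod Q str) (f : cochain M N) : Prop :=
  forall (a : 'I_(na Q)) r, ((r + str)%N + 1 < d)%N ->
    (sU M (qsrc a) ((r + str)%N) *m
       (shor M a r *m cv f (qtgt a) r + ch f a r *m sver N (qtgt a) r
        - (sver M (qsrc a) ((r + str)%N) *m ch f a r.+1
           + cv f (qsrc a) ((r + str)%N) *m shor N a r.+1))
     <= sL N (qtgt a) r.+1)%MS.

Definition isB Q str d (M N : sqmod Q str) (f : cochain M N) : Prop :=
  exists g : forall i r, 'M[K]_(sdim M i r, sdim N i r),
    (forall i r, (r < d)%N -> hom_ok (sU M i r) (sL M i r) (sU N i r) (sL N i r) (g i r)) /\
    (forall i r, (r.+1 < d)%N ->
       (sU M i r *m (cv f i r - (sver M i r *m g i r.+1 - g i r *m sver N i r))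
        <= sL N i r.+1)%MS) /\
    (forall a r, ((r + str)%N < d)%N ->
       (sU M (qsrc a) ((r + str)%N) *m
          (ch f a r - (shor M a r *m g (qtgt a) r - g (qsrc a) ((r + str)%N) *m shor N a r))
        <= sL N (qtgt a) r)%MS).

Definition clin Q str (M N : sqmod Q str) k (c : 'I_k -> K)
  (F : 'I_k -> cochain M N) : cochain M N :=
  Cochain (fun i r => \sum_(j < k) c j *: cv (F j) i r)
          (fun a r => \sum_(j < k) c j *: ch (F j) a r).

Definition csub Q str (M N : sqmod Q str) (f h : cochain M N) : cochain M N :=
  Cochain (fun i r => cv f i r - cv h i r) (fun a r => ch f a r - ch h a r).

Definition ext1_dim_is Q str d (M N : sqmod Q str) (k : nat) : Prop :=
  exists F : 'I_k -> cochain M N,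
    (forall j, cochain_ok d (F j) /\ cocycle d (F j)) /\
    (forall c : 'I_k -> K, isB d (clin c F) -> forall j, c j = 0) /\
    (forall f : cochain M N, cochain_ok d f -> cocycle d f ->
       exists c : 'I_k -> K, isB d (csub f (clin c F))).

Arguments is_submod {Q str} d M V.
Arguments quotmod {Q str} M V.
Arguments submod {Q str} M W.

(* Main.v *)
Require Import Defs.
From mathcomp Require Import all_boot all_order all_algebra.
From mathcomp Require Import ring zify.
Set Implicit Arguments. Unset Strict Implicit. Unset Printing Implicit Defensive.
Import Order.TTheory GRing.Theory Num.Theory.
Local Open Scope ring_scope.

Ltac mxring := apply/matrixP => ? ?; rewrite !mxE; ring.


Lemma zm1 (V: zmodType) (x x' a a' b b' : V) :
  x + x' - (a + a' - (b + b')) = (x - (a - b)) + (x' - (a' - b')).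
Proof. by rewrite [- (b + b')]opprD addrACA opprD addrACA. Qed.

Definition cadd Q str (M N : sqmod Q str) (f f' : cochain M N) : cochain M N :=
  Cochain (fun i r => cv f i r + cv f' i r) (fun a r => ch f a r + ch f' a r).
Definition cscale Q str (M N : sqmod Q str) (c : K) (f : cochain M N) : cochain M N :=
  Cochain (fun i r => c *: cv f i r) (fun a r => c *: ch f a r).

Lemma isB_ext Q str d (M N : sqmod Q str) (f f' : cochain M N) :
  (forall i r, cv f i r = cv f' i r) -> (forall a r, ch f a r = ch f' a r) ->
  isB d f -> isB d f'.
Proof.
move=> Ev Eh [g [H1 [H2 H3]]]; exists g; split=> //; split=> *.
  by rewrite -Ev; apply: H2.
by rewrite -Eh; apply: H3.
Qed.

Lemma isB_add Q str d (M N : sqmod Q str) (f f' : cochain M N) :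
  isB d f -> isB d f' -> isB d (cadd f f').
Proof.
move=> [g [H1 [H2 H3]]] [g' [H1' [H2' H3']]].
exists (fun i r => g i r + g' i r); split; [|split].
- move=> i r hr; case/andP: (H1 i r hr) => a b; case/andP: (H1' i r hr) => a' b'.
  by rewrite /hom_ok !mulmxDr; apply/andP; split; apply: addmx_sub.
- move=> i r hr /=.
  set x := (X in (_ *m X <= _)%MS).
  have -> : x = (cv f i r - (sver M i r *m g i r.+1 - g i r *m sver N i r)) +
                (cv f' i r - (sver M i r *m g' i r.+1 - g' i r *m sver N i r)).
    by rewrite /x mulmxDr mulmxDl zm1.
  by rewrite mulmxDr; apply: addmx_sub; [apply: H2|apply: H2'].
- move=> a r hr /=.
  set x := (X in (_ *m X <= _)%MS).
  have -> : x = (ch f a r - (shor M a r *m g (qtgt a) r - g (qsrc a) (r + str)%N *m shor N a r)) +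
                (ch f' a r - (shor M a r *m g' (qtgt a) r - g' (qsrc a) (r + str)%N *m shor N a r)).
    by rewrite /x mulmxDr mulmxDl zm1.
  by rewrite mulmxDr; apply: addmx_sub; [apply: H3|apply: H3'].
Qed.

Lemma isB_scale Q str d (M N : sqmod Q str) (c : K) (f : cochain M N) :
  isB d f -> isB d (cscale c f).
Proof.
move=> [g [H1 [H2 H3]]].
exists (fun i r => c *: g i r); split; [|split].
- move=> i r hr; case/andP: (H1 i r hr) => a b.
  by rewrite /hom_ok -!scalemxAr; apply/andP; split; apply: scalemx_sub.
- move=> i r hr /=.
  set x := (X in (_ *m X <= _)%MS).
  have -> : x = c *: (cv f i r - (sver M i r *m g i r.+1 - g i r *m sver N i r)).
    by rewrite /x -scalemxAr -scalemxAl !scalerBr.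
  by rewrite -scalemxAr; apply: scalemx_sub; apply: H2.
- move=> a r hr /=.
  set x := (X in (_ *m X <= _)%MS).
  have -> : x = c *: (ch f a r - (shor M a r *m g (qtgt a) r - g (qsrc a) (r + str)%N *m shor N a r)).
    by rewrite /x -scalemxAr -scalemxAl !scalerBr.
  by rewrite -scalemxAr; apply: scalemx_sub; apply: H3.
Qed.

Definition liftc Q (S X : qrep Q) str (W : forall i (r : nat), 'M[K]_(qdim S i))
  (V : forall i (r : nat), 'M[K]_(qdim X i)) (h : qcochain S X)
  : cochain (submod (Phi str S) W) (quotmod (Phi str X) V) :=
  @Cochain Q str (submod (Phi str S) W) (quotmod (Phi str X) V)
    (fun i r => 0) (fun a r => h a).

Lemma qcobD Q (S X : qrep Q) (g g' : forall i, 'M[K]_(qdim S i, qdim X i)) a :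
  qcob (fun i => g i + g' i) a = qcob g a + qcob g' a.
Proof. by rewrite /qcob mulmxDr mulmxDl opprD addrACA. Qed.

Lemma qisB_add Q (S X : qrep Q) (h h1 h2 : qcochain S X) :
  (forall a, h a = h1 a + h2 a) -> qisB h1 -> qisB h2 -> qisB h.
Proof.
move=> E [g1 H1] [g2 H2]; exists (fun i => g1 i + g2 i) => a.
by rewrite qcobD E H1 H2.
Qed.

Section Lift.
Variables (Q : quiver) (S X : qrep Q) (str : bool) (d : nat).
Variables (W : forall i (r : nat), 'M[K]_(qdim S i)) (V : forall i (r : nat), 'M[K]_(qdim X i)).

Lemma lift_ext (h h' : qcochain S X) :
  (forall a, h a = h' a) -> isB d (liftc str W V h) -> isB d (liftc str W V h').
Proof. by move=> E; apply: isB_ext => //= a r; rewrite E. Qed.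

Lemma liftB (g : forall i, 'M[K]_(qdim S i, qdim X i)) :
  isB d (liftc str W V (qcob g)).
Proof.
exists (fun i r => g i); split; [|split] => /=.
- by move=> i r _; rewrite /hom_ok submx1 mul0mx sub0mx.
- by move=> i r _; rewrite mul1mx mulmx1 subrr subr0 mulmx0 sub0mx.
- by move=> a r _; rewrite /qcob subrr mulmx0 sub0mx.
Qed.

Lemma liftC (h : qcochain S X) :
  (forall a r, (r + str < d)%N -> (W (qsrc a) (r + str)%N *m h a <= V (qtgt a) r)%MS) ->
  isB d (liftc str W V h).
Proof.
move=> Hh; exists (fun i r => 0); split; [|split] => /=.
- by move=> i r _; rewrite /hom_ok submx1 mul0mx sub0mx.
- by move=> i r _; rewrite mulmx0 mul0mx subrr subr0 mulmx0 sub0mx.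
- by move=> a r hr; rewrite mulmx0 mul0mx subrr subr0; apply: Hh.
Qed.

Lemma lift_okcoc (h : qcochain S X) :
  cochain_ok d (liftc str W V h) /\ cocycle d (liftc str W V h).
Proof.
split; [split|] => /=.
- by move=> i r _; rewrite /hom_ok submx1 mul0mx sub0mx.
- by move=> a r _; rewrite /hom_ok submx1 mul0mx sub0mx.
- by move=> a r _; rewrite !mulmx0 !mul0mx mulmx1 mul1mx add0r addr0 subrr mulmx0 sub0mx.
Qed.

Lemma liftD (h1 h2 : qcochain S X) :
  isB d (liftc str W V h1) -> isB d (liftc str W V h2) ->
  isB d (liftc str W V (fun a => h1 a + h2 a)).
Proof.
move=> B1 B2; apply: isB_ext (isB_add B1 B2) => /= *; by rewrite ?addr0.
Qed.

Lemma liftZ (c : K) (h : qcochain S X) :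
  isB d (liftc str W V h) -> isB d (liftc str W V (fun a => c *: h a)).
Proof.
move=> B; apply: isB_ext (isB_scale c B) => /= *; by rewrite ?scaler0.
Qed.

Lemma liftsub (f : cochain (submod (Phi str S) W) (quotmod (Phi str X) V)) (h : qcochain S X) :
  isB d (csub f (liftc str W V h)) -> isB d (liftc str W V h) -> isB d f.
Proof.
move=> B1 B2; apply: isB_ext (isB_add B1 B2) => /= *; by rewrite ?subrK.
Qed.

Lemma clin1 (c : 'I_1 -> K) (h : qcochain S X) :
  isB d (clin c (fun _ => liftc str W V h)) -> isB d (liftc str W V (fun a => c ord0 *: h a)).
Proof. by apply: isB_ext => [i r|a r]; cbn [cv ch clin liftc]; rewrite big_ord1 ?scaler0. Qed.

Lemma clin_span (f : cochain (submod (Phi str S) W) (quotmod (Phi str X) V))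
  (c : 'I_1 -> K) (h phi : qcochain S X) :
  isB d (csub f (liftc str W V h)) -> isB d (liftc str W V (fun a => h a - c ord0 *: phi a)) ->
  isB d (csub f (clin c (fun _ => liftc str W V phi))).
Proof.
move=> B1 B2; apply: isB_ext (isB_add B1 B2) => [i r|a r]; cbn [cv ch clin liftc cadd csub]; rewrite big_ord1 ?scaler0 ?addr0 //.
by rewrite addrA subrK.
Qed.

Lemma clin_one (F : 'I_1 -> cochain (submod (Phi str S) W) (quotmod (Phi str X) V)) :
  isB d (F ord0) -> isB d (clin (fun _ => 1) F).
Proof. by apply: isB_ext => [i r|a r]; cbn [cv ch clin]; rewrite big_ord1 scale1r. Qed.

End Lift.

Lemma P_general Q (S X : qrep Q) str d
  (W : forall i (r : nat), 'M[K]_(qdim S i)) (V : forall i (r : nat), 'M[K]_(qdim X i))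
  (Null : qcochain S X -> Prop)
  (HA : forall f : cochain (submod (Phi str S) W) (quotmod (Phi str X) V),
        cocycle d f -> exists h, isB d (csub f (liftc str W V h)))
  (HC : forall h, Null h -> isB d (liftc str W V h)) :
  ext1KQ_dim_is S X 1 ->
  ext1_dim_is d (submod (Phi str S) W) (quotmod (Phi str X) V) 1 ->
  forall h, Null h -> qisB h.
Proof.
move=> [FK [indK spanK]] [F0 [okF0 [ind0 _]]] h Nh.
have [c [g1 Hg1]] := spanK h.
have Eh : forall a, h a = c ord0 *: FK ord0 a + qcob g1 a.
  by move=> a; rewrite -Hg1 /qsub /qlin big_ord1 addrC subrK.
have [c0|c0] := eqVneq (c ord0) 0.
  by exists g1 => a; rewrite Eh c0 scale0r add0r.
have [k Hk] := HA (F0 ord0) (okF0 ord0).2.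
have [c' [g2 Hg2]] := spanK k.
have Ek : forall a, k a = c' ord0 *: FK ord0 a + qcob g2 a.
  by move=> a; rewrite -Hg2 /qsub /qlin big_ord1 addrC subrK.
pose e := c' ord0 / c ord0.
have Bk : isB d (liftc str W V k).
  apply: lift_ext (liftD (liftD (liftZ e (HC _ Nh)) (liftZ (- e) (liftB str d W V g1))) (liftB str d W V g2)).
  move=> a; rewrite Eh Ek scaleNr scalerDr addrK scalerA /e divfK //.
have BF : isB d (F0 ord0) := liftsub Hk Bk.
have := ind0 (fun _ => 1) (clin_one BF) ord0.
by move/eqP; rewrite oner_eq0.
Qed.

Lemma Concl_general Q (S X : qrep Q) str d
  (W : forall i (r : nat), 'M[K]_(qdim S i)) (V : forall i (r : nat), 'M[K]_(qdim X i))
  (Null : qcochain S X -> Prop)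
  (HA : forall f : cochain (submod (Phi str S) W) (quotmod (Phi str X) V),
        cocycle d f -> exists h, isB d (csub f (liftc str W V h)))
  (HD : forall h, isB d (liftc str W V h) -> exists g, Null (fun a => h a - qcob g a))
  (HN : forall h, Null h -> qisB h) :
  ext1KQ_dim_is S X 1 ->
  ext1_dim_is d (submod (Phi str S) W) (quotmod (Phi str X) V) 1.
Proof.
move=> [FK [indK spanK]].
exists (fun _ => liftc str W V (FK ord0)); split; [|split].
- by move=> j; apply: lift_okcoc.
- move=> c Hc; apply: indK.
  have [g Ng] := HD _ (clin1 Hc).
  have [g1 Hg1] := HN _ Ng.
  exists (fun i => g i + g1 i) => a.
  by rewrite /qlin big_ord1 qcobD -Hg1 addrC subrK.
- move=> f okf cof.
  have [h Hh] := HA f cof.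
  have [c [g Hg]] := spanK h.
  exists c; apply: clin_span Hh _.
  by apply: lift_ext (liftB str d W V g) => a; rewrite -Hg /qsub /qlin big_ord1.
Qed.



Lemma Vmono Q (X : qrep Q) str d (V : forall i (r : nat), 'M[K]_(qdim X i)) :
  is_submod d (Phi str X) V -> forall i r, (r < d)%N -> (V i 0%N <= V i r)%MS.
Proof.
move=> [Vv _] i; elim=> [|r IH] hr //.
apply: submx_trans (IH (ltnW hr)) _.
by have := Vv i r hr; rewrite /= mulmx1.
Qed.

Lemma HA_i Q (S X : qrep Q) str d (V : forall i (r : nat), 'M[K]_(qdim X i)) :
  is_submod d (Phi str X) V ->
  forall f : cochain (submod (Phi str S) (fun i r => 1%:M)) (quotmod (Phi str X) V),
  cocycle d f -> exists h, isB d (csub f (liftc str (fun i r => 1%:M) V h)).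
Proof.
move=> [Vv Vh] f cof.
pose g := fun i r => \sum_(k < r) (cv f i k : 'M[K]_(qdim S i, qdim X i)).
have gS : forall i r, g i r.+1 = g i r + cv f i r by move=> i r; rewrite /g big_ord_recr.
pose e := fun a r => (ch f a r : 'M[K]_(qdim S (qsrc a), qdim X (qtgt a))) -
   (qmap S a *m g (qtgt a) r - g (qsrc a) (r + str)%N *m qmap X a).
have key : forall a r, (r + str < d)%N -> (e a r - e a 0%N <= V (qtgt a) r)%MS.
  move=> a; elim=> [|r IH] hr; first by rewrite subrr sub0mx.
  have hr' : (r + str < d)%N by rewrite addSn in hr; exact: ltnW.
  have hr1 : (r + str + 1 < d)%N by rewrite addn1 -addSn.
  move: (cof a r hr1) => /=; rewrite !mul1mx !mulmx1 => C.
  have E : e a r.+1 - e a 0%N = - (qmap S a *m cv f (qtgt a) r + ch f a r -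
      (ch f a r.+1 + cv f (qsrc a) (r + str)%N *m qmap X a)) + (e a r - e a 0%N).
    rewrite /e addSn !gS !mulmxDr !mulmxDl; mxring.
  rewrite E; apply: addmx_sub; first by rewrite eqmx_opp.
  apply: submx_trans (IH hr') _.
  have hr2 : (r.+1 < d)%N by apply: leq_ltn_trans (leq_addr str r.+1) hr.
  by have := Vv (qtgt a) r hr2; rewrite /= mulmx1.
exists (fun a => e a 0%N); exists g; split; [|split].
- by move=> i r _; rewrite /hom_ok /= submx1 mul0mx sub0mx.
- move=> i r hr /=.
  have -> : cv f i r - 0 - (1%:M *m g i r.+1 - g i r *m 1%:M) = 0.
    rewrite gS !mul1mx !mulmx1; mxring.
  by rewrite mulmx0 sub0mx.
- move=> a r hr /=.
  by rewrite mul1mx addrAC; apply: key.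
Qed.

Lemma HD_i Q (S X : qrep Q) str d (V : forall i (r : nat), 'M[K]_(qdim X i)) :
  (if str then 2 <= d else 1 <= d)%N -> is_submod d (Phi str X) V ->
  forall h : qcochain S X, isB d (liftc str (fun i r => 1%:M : 'M[K]_(qdim S i)) V h) ->
  exists g, forall a, (h a - qcob g a <= V (qtgt a) 0%N)%MS.
Proof.
case: str => hd [Vv Vh] h [g [_ [Hv Hh]]]; exists (fun i => g i 0%N) => a; rewrite /qcob.
- have E1 : (0 + true = 1)%N by [].
  have H1 := Hh a 0%N hd.
  have H2 := Hv (qsrc a) 0%N hd.
  have H3 := Vh a 0%N hd.
  rewrite /= E1 !mul1mx in H1 H3 *.
  rewrite /= !mul1mx !mulmx1 in H2.
  have -> : h a - (qmap S a *m g (qtgt a) 0%N - g (qsrc a) 0%N *m qmap X a) =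
    (h a - (qmap S a *m g (qtgt a) 0%N - g (qsrc a) 1%N *m qmap X a)) +
    (0 - (g (qsrc a) 1%N - g (qsrc a) 0%N)) *m qmap X a.
    rewrite !mulmxBl mul0mx; mxring.
  apply: addmx_sub => //.
  exact: submx_trans (submxMr _ H2) H3.
- have H1 := Hh a 0%N hd.
  by rewrite /= mul1mx in H1.
Qed.

Lemma split_i Q (S X : qrep Q) (V V' : forall i (r : nat), 'M[K]_(qdim X i)) (h : qcochain S X) :
  (forall a, (h a <= V (qtgt a) 0%N + V' (qtgt a) 0%N)%MS) ->
  exists h1 h2 : qcochain S X, (forall a, h a = h1 a + h2 a) /\
    (forall a, (h1 a <= V (qtgt a) 0%N)%MS) /\ (forall a, (h2 a <= V' (qtgt a) 0%N)%MS).
Proof.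
move=> Hh.
have /fin_all_exists [u Hu] : forall a, exists u : 'M[K]_(qdim S (qsrc a), qdim X (qtgt a)) *
    'M[K]_(qdim S (qsrc a), qdim X (qtgt a)),
    h a = u.1 *m V (qtgt a) 0%N + u.2 *m V' (qtgt a) 0%N.
  by move=> a; apply/sub_addsmxP.
exists (fun a => (u a).1 *m V (qtgt a) 0%N), (fun a => (u a).2 *m V' (qtgt a) 0%N).
by split; [exact: Hu | split => a; exact: submxMl].
Qed.

Lemma submod_adds Q str d (M : sqmod Q str) (V V' : forall i r, 'M[K]_(sdim M i r)) :
  is_submod d M V -> is_submod d M V' -> is_submod d M (fun i r => (V i r + V' i r)%MS).
Proof.
move=> [Vv Vh] [Vv' Vh']; split=> *; rewrite addsmxMr; apply: addsmxS.
- exact: Vv. - exact: Vv'. - exact: Vh. - exact: Vh'.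
Qed.

Lemma part_i (Q : quiver) (S X : qrep Q) (str : bool) (d : nat) :
  (if str then 2 <= d else 1 <= d)%N ->
  ext1KQ_dim_is S X 1 ->
  (forall V V' : forall (i : 'I_(nv Q)) (r : nat), 'M[K]_(qdim X i),
     is_submod d (Phi str X) V -> is_submod d (Phi str X) V' ->
     ext1_dim_is d (Phi str S) (quotmod (Phi str X) V) 1 ->
     ext1_dim_is d (Phi str S) (quotmod (Phi str X) V') 1 ->
     ext1_dim_is d (Phi str S)
       (quotmod (Phi str X) (fun i r => (V i r + V' i r)%MS)) 1).
Proof.
move=> hd HK V V' sV sV' E E'.
have HC : forall V0, is_submod d (Phi str X) V0 -> forall h : qcochain S X,
    (forall a, (h a <= V0 (qtgt a) 0%N)%MS) -> isB d (liftc str (fun i r => 1%:M : 'M[K]_(qdim S i)) V0 h).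
  move=> V0 sV0 h Nh; apply: liftC => a r hr /=; rewrite mul1mx.
  apply: submx_trans (Nh a) (Vmono sV0 _ _).
  exact: leq_ltn_trans (leq_addr str r) hr.
have PV := P_general (HA_i sV) (HC V sV) HK E.
have PV' := P_general (HA_i sV') (HC V' sV') HK E'.
have sVV := submod_adds sV sV'.
apply: (Concl_general (HA_i sVV) (HD_i hd sVV) _ HK).
move=> h Nh; have [h1 [h2 [Eh [N1 N2]]]] := @split_i Q S X V V' h Nh.
exact: qisB_add Eh (PV _ N1) (PV' _ N2).
Qed.



Lemma trN m n (M : 'M[K]_(m, n)) : (- M)^T = - M^T.
Proof. by apply/matrixP => i j; rewrite !mxE. Qed.

Lemma capsplit n m (A B : 'M[K]_n) (h : 'M[K]_(n, m)) :
  (A :&: B)%MS *m h = 0 -> exists h2, A *m h2 = A *m h /\ B *m h2 = 0.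
Proof.
move=> Hh.
pose Mt := row_mx A^T B^T.
pose Y := row_mx (h^T *m A^T) (0 : 'M[K]_(m, n)).
have sub : (Y <= Mt)%MS.
  rewrite submxE.
  have Hc := mulmx_coker Mt.
  rewrite -[cokermx Mt]vsubmxK in Hc *.
  set v1 := usubmx _ in Hc *; set v2 := dsubmx _ in Hc *.
  rewrite /Mt mul_row_col in Hc. rewrite /Y mul_row_col mul0mx addr0.
  have E : v1^T *m A = - (v2^T *m B).
    apply: trmx_inj; rewrite trmx_mul trmxK trN trmx_mul trmxK.
    by apply/eqP; rewrite -addr_eq0; apply/eqP; exact: Hc.
  have capsub : (v1^T *m A <= A :&: B)%MS.
    rewrite sub_capmx; apply/andP; split; first exact: submxMl.
    by rewrite E -mulNmx; exact: submxMl.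
  have /submxP [w Hw] := capsub.
  apply/eqP; apply: trmx_inj; rewrite !trmx_mul !trmxK trmx0.
  by rewrite mulmxA Hw -mulmxA Hh mulmx0.
have Ex := mulmxKpV sub.
rewrite /Mt mul_mx_row /Y in Ex; case/eq_row_mx: Ex => E1 E2.
exists (Y *m pinvmx Mt)^T; split.
  by apply: trmx_inj; rewrite trmx_mul trmxK E1 trmx_mul.
by apply: trmx_inj; rewrite trmx_mul trmxK E2 trmx0.
Qed.

Lemma Wmono Q (S : qrep Q) str d (W : forall i (r : nat), 'M[K]_(qdim S i)) :
  is_submod d (Phi str S) W -> forall i r, (r < d)%N -> (W i r <= W i d.-1)%MS.
Proof.
move=> [Wv _] i.
have gen : forall k r, (r + k < d)%N -> (W i r <= W i (r + k)%N)%MS.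
  elim=> [|k IH] r hr; first by rewrite addn0.
  have hr' : (r + k < d)%N by lia.
  apply: submx_trans (IH r hr') _.
  have := Wv i (r + k)%N ltac:(lia); rewrite /= mulmx1.
  by have -> : (r + k.+1 = (r + k).+1)%N by lia.
move=> r hr; have := gen (d.-1 - r)%N r ltac:(lia).
by have -> : (r + (d.-1 - r))%N = d.-1 by lia.
Qed.

Lemma HA_ii Q (S X : qrep Q) str d (W : forall i (r : nat), 'M[K]_(qdim S i)) :
  is_submod d (Phi str S) W ->
  forall f : cochain (submod (Phi str S) W) (quotmod (Phi str X) (fun i r => 0 : 'M[K]_(qdim X i))),
  cocycle d f -> exists h, isB d (csub f (liftc str W (fun i r => 0 : 'M[K]_(qdim X i)) h)).
Proof.
move=> [Wv Wh] f cof.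
pose g := fun i r => - \sum_(r <= k < d.-1) (cv f i k : 'M[K]_(qdim S i, qdim X i)).
have gS : forall i r, (r.+1 < d)%N -> g i r = g i r.+1 - cv f i r.
  move=> i r hr; rewrite /g big_ltn; last by lia.
  by rewrite opprD addrC.
pose e := fun a r => (ch f a r : 'M[K]_(qdim S (qsrc a), qdim X (qtgt a))) -
   (qmap S a *m g (qtgt a) r - g (qsrc a) (r + str)%N *m qmap X a).
pose top := (d.-1 - str)%N.
have key : forall a k r, (r + k = top)%N -> (r + str < d)%N ->
    W (qsrc a) (r + str)%N *m (e a r - e a top) = 0.
  move=> a; elim=> [|k IH] r hk hr.
    by move: hk; rewrite addn0 => ->; rewrite subrr mulmx0.
  have IH' := IH r.+1 ltac:(lia) ltac:(lia).
  have hr1 : (r + str + 1 < d)%N by lia.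
  move: (cof a r hr1) => /=; rewrite !mul1mx !mulmx1 submx0 => /eqP C.
  have /submxP [u Hu] : (W (qsrc a) (r + str)%N <= W (qsrc a) (r + str)%N.+1)%MS.
    by have := Wv (qsrc a) (r + str)%N ltac:(lia); rewrite /= mulmx1.
  have E : e a r - e a top = (qmap S a *m cv f (qtgt a) r + ch f a r -
      (ch f a r.+1 + cv f (qsrc a) (r + str)%N *m qmap X a)) + (e a r.+1 - e a top).
    rewrite /e addSn (gS (qtgt a) r) ?(gS (qsrc a) (r + str)%N) ?mulmxBr ?mulmxBl; try lia.
    mxring.
  rewrite E mulmxDr C add0r Hu -mulmxA.
  by rewrite addSn in IH'; rewrite IH' mulmx0.
exists (fun a => e a top); exists g; split; [|split].
- by move=> i r _; rewrite /hom_ok /= submx1 mul0mx sub0mx.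
- move=> i r hr /=.
  have -> : cv f i r - 0 - (1%:M *m g i r.+1 - g i r *m 1%:M) = 0.
    rewrite (gS i r hr) !mul1mx !mulmx1; mxring.
  by rewrite mulmx0 sub0mx.
- move=> a r hr /=.
  rewrite addrAC submx0; apply/eqP; apply: (key a (top - r)%N r) => //; lia.
Qed.

Lemma HD_ii Q (S X : qrep Q) str d (W : forall i (r : nat), 'M[K]_(qdim S i)) :
  (if str then 2 <= d else 1 <= d)%N -> is_submod d (Phi str S) W ->
  forall h : qcochain S X, isB d (liftc str W (fun i r => 0 : 'M[K]_(qdim X i)) h) ->
  exists g, forall a, W (qsrc a) d.-1 *m (h a - qcob g a) = 0.
Proof.
case: str => hd [Wv Wh] h [g [_ [Hv Hh]]]; exists (fun i => g i d.-1) => a; rewrite /qcob.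
- case: d hd Wv Wh Hv Hh => [|[|d]] // hd Wv Wh Hv Hh /=.
  have E1 : (d + true = d.+1)%N by exact: addn1.
  have H1 := Hh a d ltac:(rewrite E1; done).
  have H2 := Hv (qtgt a) d ltac:(done).
  have H3 := Wh a d ltac:(rewrite E1; done).
  rewrite /= E1 submx0 in H1 H3; move/eqP: H1 => H1.
  rewrite /= !mul1mx !mulmx1 submx0 sub0r opprB in H2; move/eqP: H2 => H2.
  have /submxP [u Hu] := H3.
  have -> : h a - (qmap S a *m g (qtgt a) d.+1 - g (qsrc a) d.+1 *m qmap X a) =
    (h a - (qmap S a *m g (qtgt a) d - g (qsrc a) d.+1 *m qmap X a)) +
    qmap S a *m (g (qtgt a) d - g (qtgt a) d.+1).
    rewrite mulmxBr; mxring.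
  by rewrite mulmxDr H1 add0r mulmxA Hu -mulmxA H2 mulmx0.
- have E0 : (d.-1 + false = d.-1)%N by exact: addn0.
  have H1 := Hh a d.-1 ltac:(rewrite E0; lia).
  by rewrite /= E0 submx0 in H1; apply/eqP.
Qed.

Lemma split_ii Q (S X : qrep Q) d (W W' : forall i (r : nat), 'M[K]_(qdim S i)) (h : qcochain S X) :
  (forall a, (W (qsrc a) d.-1 :&: W' (qsrc a) d.-1)%MS *m h a = 0) ->
  exists h1 h2 : qcochain S X, (forall a, h a = h1 a + h2 a) /\
    (forall a, W (qsrc a) d.-1 *m h1 a = 0) /\ (forall a, W' (qsrc a) d.-1 *m h2 a = 0).
Proof.
move=> Hh.
have /fin_all_exists [u Hu] : forall a, exists u : 'M[K]_(qdim S (qsrc a), qdim X (qtgt a)),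
    W (qsrc a) d.-1 *m u = W (qsrc a) d.-1 *m h a /\ W' (qsrc a) d.-1 *m u = 0.
  by move=> a; apply: capsplit.
exists (fun a => h a - u a), u.
split; [by move=> a; rewrite subrK | split => a].
  by rewrite mulmxBr (Hu a).1 subrr.
exact: (Hu a).2.
Qed.

Lemma submod_cap Q str d (M : sqmod Q str) (V V' : forall i r, 'M[K]_(sdim M i r)) :
  is_submod d M V -> is_submod d M V' -> is_submod d M (fun i r => (V i r :&: V' i r)%MS).
Proof.
move=> [Vv Vh] [Vv' Vh']; split=> *; rewrite sub_capmx; apply/andP; split.
- exact: submx_trans (submxMr _ (capmxSl _ _)) (Vv _ _ _).
- exact: submx_trans (submxMr _ (capmxSr _ _)) (Vv' _ _ _).
- exact: submx_trans (submxMr _ (capmxSl _ _)) (Vh _ _ _).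
- exact: submx_trans (submxMr _ (capmxSr _ _)) (Vh' _ _ _).
Qed.

Lemma part_ii (Q : quiver) (S X : qrep Q) (str : bool) (d : nat) :
  (if str then 2 <= d else 1 <= d)%N ->
  ext1KQ_dim_is S X 1 ->
  (forall W W' : forall (i : 'I_(nv Q)) (r : nat), 'M[K]_(qdim S i),
     is_submod d (Phi str S) W -> is_submod d (Phi str S) W' ->
     ext1_dim_is d (submod (Phi str S) W) (Phi str X) 1 ->
     ext1_dim_is d (submod (Phi str S) W') (Phi str X) 1 ->
     ext1_dim_is d (submod (Phi str S) (fun i r => (W i r :&: W' i r)%MS))
       (Phi str X) 1).
Proof.
move=> hd HK W W' sW sW' E E'.
have HC : forall W0, is_submod d (Phi str S) W0 -> forall h : qcochain S X,
    (forall a, W0 (qsrc a) d.-1 *m h a = 0) ->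
    isB d (liftc str W0 (fun i r => 0 : 'M[K]_(qdim X i)) h).
  move=> W0 sW0 h Nh; apply: liftC => a r hr /=.
  have /submxP [u Hu] := Wmono sW0 (qsrc a) hr.
  by rewrite submx0 Hu -mulmxA Nh mulmx0.
have PW := P_general (HA_ii (X := X) sW) (HC W sW) HK E.
have PW' := P_general (HA_ii (X := X) sW') (HC W' sW') HK E'.
have sWW := submod_cap sW sW'.
apply: (Concl_general (HA_ii (X := X) sWW) (HD_ii (X := X) hd sWW) _ HK).
move=> h Nh; have [h1 [h2 [Eh [N1 N2]]]] := @split_ii Q S X d W W' h Nh.
exact: qisB_add Eh (PW _ N1) (PW' _ N2).
Qed.

Unset Implicit Arguments.

Theorem lemma3p8 (Q : quiver) (S X : qrep Q) (str : bool) (d : nat) :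
  (if str then 2 <= d else 1 <= d)%N ->
  ext1KQ_dim_is S X 1 ->
  (forall V V' : forall (i : 'I_(nv Q)) (r : nat), 'M[K]_(qdim X i),
     is_submod d (Phi str X) V -> is_submod d (Phi str X) V' ->
     ext1_dim_is d (Phi str S) (quotmod (Phi str X) V) 1 ->
     ext1_dim_is d (Phi str S) (quotmod (Phi str X) V') 1 ->
     ext1_dim_is d (Phi str S)
       (quotmod (Phi str X) (fun i r => (V i r + V' i r)%MS)) 1) /\
  (forall W W' : forall (i : 'I_(nv Q)) (r : nat), 'M[K]_(qdim S i),
     is_submod d (Phi str S) W -> is_submod d (Phi str S) W' ->
     ext1_dim_is d (submod (Phi str S) W) (Phi str X) 1 ->
     ext1_dim_is d (submod (Phi str S) W') (Phi str X) 1 ->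
     ext1_dim_is d (submod (Phi str S) (fun i r => (W i r :&: W' i r)%MS))
       (Phi str X) 1).
Proof.
move=> hd HK; split; [exact: part_i | exact: part_ii].
Qed.
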